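(* In the category $\mathbb{T}_\alpha$, the socle of $V^*$ is $V_*=V^*_{\aleph_0}$, and for every infinite cardinal $\beta\le\alpha$ the socle of $V^*/V^*_\beta$ is $V^*_{\beta^+}/V^*_\beta$, which is a simple module. Consequently the transfinite socle filtration of $V^*$ is the chain $0\subset V^*_{\aleph_0}\subset\cdots\subset V^*_\beta\subset\cdots\subset V^*_\alpha\subset V^*$ of subspaces $V^*_\beta$, $\beta$ ranging over infinite cardinals $\le\alpha^+$.
   Context: $\mathbb{K}$ is an algebraically closed field of characteristic $0$, $\alpha$ an infinite cardinal, $\beta^+$ the successor cardinal. $V,V_*$ are $\alpha$-dimensional with a nondegenerate pairing $\mathbf{p}:V_*\otimes V\to\mathbb{K}$ admitting dual bases indexed by $\Sigma$, $|\Sigma|=\alpha$. Elements of $V^*=\operatorname{Hom}(V,\mathbb{K})$ are $\Sigma$-indexed row vectors, $V_*$ the finitely supported ones; for an infinite cardinal $\beta\le\alpha^+$, $V^*_\beta$ is the subspace of row vectors with fewer than $\beta$ nonzero entries ($V^*_{\alpha^+}=V^*$). $\mathfrak{gl}^M=\{x\in\operatorname{End}(V_* ):x^*(V)\subseteq V\}$ (matrices with finitely many nonzero entries in each row and column) acts on $V$ by left multiplication and on $V^*$ by $g\cdot v=-vg$. $\mathbb{T}_\alpha$ is the smallest full monoidal subcategory of $\mathfrak{gl}^M$-mod containing $V$ and $V^*$ and closed under subquotients. The transfinite socle filtration of $X$ is defined by $\operatorname{soc}^1X=\operatorname{soc}X$, $\operatorname{soc}^{b+1}X$ the preimage in $X$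 of $\operatorname{soc}(X/\operatorname{soc}^bX)$, and at limit ordinals the union of the previous terms. *)

(* Defs.v *)
From HB Require Import structures.
From mathcomp Require Import all_boot all_algebra.
Set Implicit Arguments. Unset Strict Implicit. Unset Printing Implicit Defensive.
Import GRing.Theory.
Local Open Scope ring_scope.

Section Defs.
Variables (K : fieldType) (Sigma : eqType).

(* V^* = all Sigma-indexed row vectors; subspaces of V^* are predicates. *)
Definition rowvec := Sigma -> K.
Definition subsp := rowvec -> Prop.

Definition sub_le (P Q : subsp) : Prop := forall v, P v -> Q v.
Definition sub_eq (P Q : subsp) : Prop := forall v, P v <-> Q v.

Definition zero_sub : subsp := fun v => forall i, v i = 0.
Definition full_sub : subsp := fun _ => True.

Definition glM (g : Sigma -> Sigma -> K) : Prop :=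
  (forall i, exists s : seq Sigma, forall j, g i j != 0 -> j \in s) /\
  (forall j, exists s : seq Sigma, forall i, g i j != 0 -> i \in s).

(* w = g . v = - v g  (the sum over column j of g is finite) *)
Definition act (g : Sigma -> Sigma -> K) (v w : rowvec) : Prop :=
  forall j, exists s : seq Sigma, uniq s /\ (forall i, g i j != 0 -> i \in s) /\
    w j = - \sum_(i <- s) v i * g i j.

Definition subspace (P : subsp) : Prop :=
  P (fun _ => 0) /\ forall (a : K) u v, P u -> P v -> P (fun i => a * u i + v i).

Definition submod (P : subsp) : Prop :=
  subspace P /\ forall g v w, glM g -> P v -> act g v w -> P w.

(* P/U is a simple submodule of V^*/U  (P a submodule containing U) *)
Definition simple_over (U P : subsp) : Prop :=
  [/\ submod P, sub_le U P, ~ sub_le P U &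
    forall Q, submod Q -> sub_le U Q -> sub_le Q P -> sub_le Q U \/ sub_le P Q].

(* preimage in V^* of soc(V^*/U): U + (sum of all simple submodules of V^*/U) *)
Definition socle_over (U : subsp) : subsp := fun v =>
  exists (n : nat) (p : 'I_n -> rowvec),
    (forall k, exists P, simple_over U P /\ P (p k)) /\
    U (fun i => v i - \sum_(k < n) p k i).

Definition finsupp : subsp := fun v =>
  exists s : seq Sigma, forall i, v i != 0 -> i \in s.

(* V^*_beta for beta = |B| : fewer than |B| nonzero entries,
   i.e. B does not inject into the support of v *)
Definition Vlt (B : Type) : subsp := fun v =>
  ~ exists f : B -> Sigma, injective f /\ forall b, v (f b) != 0.

(* V^*_{beta^+} for beta = |B| : at most |B| nonzero entries *)
Definition Vle (B : Type) : subsp := fun v =>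
  exists f : {i : Sigma | v i != 0} -> B, injective f.

(* The set of terms of the transfinite socle filtration of V^*:
   the smallest family containing soc^0 = 0 (empty union), closed under
   soc^b |-> soc^{b+1} and under unions (limit stages). *)
Inductive SocLayer : subsp -> Prop :=
| SL_union (F : subsp -> Prop) :
    (forall W, F W -> SocLayer W) ->
    SocLayer (fun v => zero_sub v \/ exists W, F W /\ W v)
| SL_succ (W : subsp) : SocLayer W -> SocLayer (socle_over W).

End Defs.

Arguments zero_sub : clear implicits.
Arguments full_sub : clear implicits.
Arguments finsupp : clear implicits.
Arguments Vlt : clear implicits.
Arguments Vle : clear implicits.

(* Main.v *)
Require Import Defs.
From HB Require Import structures.
From mathcomp Require Import all_boot all_algebra.
From mathcomp Require Import boolp classical_sets.
From mathcomp Require Import zify.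
From Stdlib Require Import Classical.
Set Implicit Arguments. Unset Strict Implicit. Unset Printing Implicit Defensive.

Definition le (A B : Type) := exists f : A -> B, injective f.

Lemma le_refl A : le A A. Proof. by exists id. Qed.
Lemma le_trans A B C : le A B -> le B C -> le A C.
Proof. by move=> [f fi] [g gi]; exists (g \o f); apply: inj_comp. Qed.

Lemma family_min (I : Type) (T : I -> Type) : inhabited I ->
  exists k, forall j, le (T k) (T j).
Proof.
move=> [i0].
pose Row := forall i, T i.
pose P : set (set Row) := fun H => forall i (x y : Row), H x -> H y -> x i = y i -> x = y.
have chain : forall F, (F `<=` P)%classic -> total_on F subset -> P (\bigcup_(X in F) X)%classic.
  move=> F FP tot i x y [X FX Xx] [Y FY Yy] e.
  case: (tot X Y FX FY) => [XY|YX].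
    exact: (FP Y FY i x y (XY _ Xx) Yy e).
  exact: (FP X FX i x y Xx (YX _ Yy) e).
have [H [PH maxH]] := Zorn_bigcup chain.
have [k Hk] : exists k, forall t : T k, exists x, H x /\ x k = t.
  apply: NNPP => nk.
  have h : forall i, exists t : T i, forall x, H x -> x i <> t.
    move=> i; apply: NNPP => ni; apply: nk; exists i => t.
    apply: NNPP => nt; apply: ni; exists t => x Hx e; apply: nt; exact: (ex_intro _ x (conj Hx e)).
  pose x0 : Row := fun i => sval (cid (h i)).
  have x0s : forall i x, H x -> x i <> x0 i by move=> i x Hx; exact: (svalP (cid (h i)) x Hx).
  apply: (maxH (H `|` [set x0])%classic).
    split; first by move=> x Hx; left.
    move=> /(_ x0 (or_intror erefl)) Hx0; exact: (x0s i0 x0 Hx0 erefl).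
  move=> i x y [Hx|->] [Hy|->] e.
  - exact: PH i x y Hx Hy e.
  - by case: (x0s i x Hx e).
  - by case: (x0s i y Hy (esym e)).
  - by [].
exists k => j.
exists (fun t => sval (cid (Hk t)) j) => t t' e.
case: (svalP (cid (Hk t))) => H1 E1; case: (svalP (cid (Hk t'))) => H2 E2.
by rewrite -E1 -E2 (PH j _ _ H1 H2 e).
Qed.

Lemma le_total A B : le A B \/ le B A.
Proof.
have [[] Hk] := @family_min bool (fun b => if b then A else B) (inhabits true).
  by left; exact: (Hk false).
by right; exact: (Hk true).
Qed.


Lemma le_prod_nat B : le nat B -> le (B * nat) B.
Proof.
move=> [r0 r0i].
pose Row := nat -> B.
pose P : set (set Row) := fun H => forall x y m n, H x -> H y -> x m = y n -> x = y /\ m = n.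
have chain : forall F, (F `<=` P)%classic -> total_on F subset -> P (\bigcup_(X in F) X)%classic.
  move=> F FP tot x y m n [X FX Xx] [Y FY Yy] e.
  case: (tot X Y FX FY) => [XY|YX].
    exact: (FP Y FY x y m n (XY _ Xx) Yy e).
  exact: (FP X FX x y m n Xx (YX _ Yy) e).
have [H [PH maxH]] := Zorn_bigcup chain.
pose E b := exists x n, H x /\ x n = b.
have nR : ~ le nat {b | ~ E b}.
  move=> [r ri]; pose x0 : Row := fun n => sval (r n).
  apply: (maxH (H `|` [set x0])%classic).
    split; first by move=> x Hx; left.
    move=> /(_ x0 (or_intror erefl)) Hx0; apply: (svalP (r 0%N)).
    by exists x0, 0%N; split.
  move=> x y m n [Hx|->] [Hy|->] e.
  - exact: PH x y m n Hx Hy e.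
  - by case: (svalP (r n)); exists x, m; split.
  - by case: (svalP (r m)); exists y, n; split.
  - split => //; apply: ri; move: e; rewrite /x0; case: (r m) => [a pa]; case: (r n) => [b' pb] /= e.
    by subst; congr exist; exact: Prop_irrelevance.
have [rho rhoi] : le {b | ~ E b} nat by case: (le_total {b | ~ E b} nat) => // /nR.
have [x0 Hx0] : exists x0, H x0.
  apply: NNPP => nH; apply: nR.
  have nE : forall n, ~ E (r0 n) by move=> n [x [m [Hx _]]]; apply: nH; exists x.
  exists (fun n => exist (fun b => ~ E b) (r0 n) (nE n)).
  by move=> m n /(congr1 sval) /r0i.
have pk : forall b, E b -> {p : Row * nat | H p.1 /\ p.1 p.2 = b}.
  move=> b h; apply: cid; case: h => x [n hx]; by exists (x, n).
pose f (p : B * nat) : B :=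
  match pselect (E p.1) with
  | left h => (sval (pk _ h)).1 (2 * pickle ((sval (pk _ h)).2, p.2))
  | right nE => x0 (2 * pickle (rho (exist _ p.1 nE), p.2)).+1
  end.
exists f => [[b k] [b' k']]; rewrite /f /=.
case: (pselect (E b)) => [hb|nb]; case: (pselect (E b')) => [hb'|nb'].
- case: (pk b hb) => [[x n] /= [Hx ex]]; case: (pk b' hb') => [[x' n'] /= [Hx' ex']] /= e.
  have [exx /eqP] := PH _ _ _ _ Hx Hx' e.
  rewrite eqn_mul2l /= => /eqP /(pcan_inj pickleK) [en ek].
  by rewrite -ex -ex' exx en ek.
- case: (pk b hb) => [[x n] /= [Hx ex]] /= e.
  have [_] := PH _ _ _ _ Hx Hx0 e; lia.
- case: (pk b' hb') => [[x n] /= [Hx ex]] /= e.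
  have [_] := PH _ _ _ _ Hx0 Hx e; lia.
- move=> e; have [_ /eqP] := PH _ _ _ _ Hx0 Hx0 e.
  rewrite eqSS eqn_mul2l /= => /eqP /(pcan_inj pickleK) [/rhoi /(congr1 sval) /= -> ->].
  by [].
Qed.

Lemma le_sum_nat B : le nat B -> le (B + B) B.
Proof.
move=> h; apply: le_trans (le_prod_nat h).
exists (fun s => match s with inl b => (b, 0%N) | inr b => (b, 1%N) end).
by move=> [b|b] [b'|b'] //= [->].
Qed.

Lemma le_prodl A B : le A B -> le (A * nat) (B * nat).
Proof. by move=> [f fi]; exists (fun p => (f p.1, p.2)) => [[a n] [a' n']] /= [/fi -> ->]. Qed.

Lemma le_suml A B C : le A C -> le B C -> le nat C -> le (A + B) C.
Proof.
move=> [f fi] [g gi] h; apply: le_trans (le_sum_nat h).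
exists (fun s => match s with inl a => inl (f a) | inr b => inr (g b) end).
by move=> [a|a] [a'|a'] //= [] => [/fi ->|/gi ->].
Qed.

Lemma sval_injP T (P : T -> Prop) (x y : {a | P a}) : sval x = sval y -> x = y.
Proof. by case: x => a pa; case: y => b pb /= e; subst; congr exist; exact: Prop_irrelevance. Qed.

Section Fin.
Variable Sigma : eqType.
Definition finS (P : Sigma -> Prop) := exists s : seq Sigma, forall x, P x -> x \in s.

Lemma finS_nle P : finS P -> ~ le nat {x | P x}.
Proof.
move=> [s hs] [f fi].
pose t := map (fun n => sval (f n)) (iota 0 (size s).+1).
have ut : uniq t.
  rewrite map_inj_in_uniq ?iota_uniq // => m n _ _ e; apply: fi; exact: sval_injP.
have st : {subset t <= s} by move=> y /mapP [n _ ->]; apply: hs; exact: (svalP (f n)).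
by have := uniq_leq_size ut st; rewrite size_map size_iota ltnn.
Qed.

Lemma nfinS_le P : ~ finS P -> le nat {x | P x}.
Proof.
move=> nf.
have nx : forall s : seq Sigma, exists x, P x /\ x \notin s.
  move=> s; apply: NNPP => h; apply: nf; exists s => x Px.
  case: (boolP (x \in s)) => // xs; exfalso; apply: h; by exists x.
pose nxt s := sval (cid (nx s)).
pose g := fix g (n : nat) : seq Sigma := if n is m.+1 then rcons (g m) (nxt (g m)) else [::].
have Ph : forall n, P (nxt (g n)) /\ nxt (g n) \notin g n by move=> n; exact: (svalP (cid (nx (g n)))).
have hin : forall m n, (m < n)%N -> nxt (g m) \in g n.
  move=> m; elim=> // n IH; rewrite ltnS leq_eqVlt => /orP [/eqP ->|lt] /=;
  by rewrite mem_rcons in_cons ?eqxx // IH ?orbT.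
exists (fun n => exist P (nxt (g n)) (proj1 (Ph n))) => m n /(congr1 sval) /= e.
case: (ltngtP m n) => // lt.
  by have := hin _ _ lt; rewrite e => H; have := proj2 (Ph n); rewrite H.
by have := hin _ _ lt; rewrite -e => H; have := proj2 (Ph m); rewrite H.
Qed.
End Fin.

Import GRing.Theory.
Local Open Scope ring_scope.

Section Alg.
Variables (K : fieldType) (Sigma : eqType).
Local Notation rowvec := (rowvec K Sigma).
Local Notation subsp := (subsp K Sigma).

Lemma subeqE (P Q : subsp) : sub_eq P Q -> P = Q.
Proof. by move=> h; apply: funext => v; apply: propext; exact: h. Qed.

Lemma sub_add (P : subsp) u v : subspace P -> P u -> P v -> P (fun i => u i + v i).
Proof. by move=> [_ h] Pu Pv; have := h 1 u v Pu Pv; under eq_fun do rewrite mul1r. Qed.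

Lemma sub_sum (P : subsp) n (p : 'I_n -> rowvec) : subspace P -> (forall k, P (p k)) ->
  P (fun i => \sum_(k < n) p k i).
Proof.
move=> sP; elim: n p => [|n IH] p hp.
  by under eq_fun do rewrite big_ord0; case: sP.
under eq_fun do rewrite big_ord_recr /=.
apply: sub_add => //; try exact: hp.
by apply: (IH (fun k => p (widen_ord (leqnSn n) k))).
Qed.

Lemma Vlt_iff B (v : rowvec) : Vlt K Sigma B v <-> ~ le B {i | v i != 0}.
Proof.
split=> h [f fi]; apply: h.
  exists (fun b => val (f b)); split; first by move=> x y /val_inj /fi.
  by move=> b; exact: (valP (f b)).
case: fi => fi fv; exists (fun b => exist (fun i => v i != 0) (f b) (fv b)).
by move=> x y /(congr1 val) /fi.
Qed.

Lemma act_supp (g : Sigma -> Sigma -> K) (v w : rowvec) : act g v w -> forall j, w j != 0 ->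
  exists i, v i != 0 /\ g i j != 0.
Proof.
move=> a j wj; apply: NNPP => nex; move: wj; case: (a j) => s [_ [_ ->]].
rewrite big1_seq ?oppr0 ?eqxx // => i _.
case: (eqVneq (v i) 0) => [->|vi]; first by rewrite mul0r.
case: (eqVneq (g i j) 0) => [->|gij]; first by rewrite mulr0.
by case: nex; exists i.
Qed.

Lemma proj_act (D : pred Sigma) (v : rowvec) :
  let g := fun i j => if (i == j) && D j then -1 else 0 : K in
  glM g /\ act g v (fun j => if D j then v j else 0).
Proof.
move=> g; split.
  split=> i; exists [:: i] => j; rewrite /g inE.
    by apply: contraR => ne; rewrite (eq_sym i j) (negbTE ne) /= eqxx.
  by apply: contraR => ne; rewrite (negbTE ne) /= eqxx.
move=> j; exists [:: j]; split=> //; split.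
  by move=> i; rewrite /g inE; apply: contraR => ne; rewrite (negbTE ne) /= eqxx.
rewrite big_seq1 /g eqxx /=; case: (D j); by rewrite ?mulrN1 ?opprK ?mulr0 ?oppr0.
Qed.

Lemma transport_act (w u : rowvec) (sigma : Sigma -> Sigma) :
  (forall j, u j != 0 -> w (sigma j) != 0) ->
  (forall i, exists s : seq Sigma, forall j, u j != 0 -> sigma j = i -> j \in s) ->
  exists g, glM g /\ act g w u.
Proof.
move=> hw hr.
pose g := fun i j => if (u j != 0) && (sigma j == i) then - u j / w i else 0.
exists g; split; first split.
- move=> i; have [s hs] := hr i; exists s => j; rewrite /g.
  by case uj: (u j != 0); case: (sigma j =P i) => e /=; rewrite ?eqxx //= => _; exact: (hs j uj e).
- move=> j; exists [:: sigma j] => i; rewrite /g.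
  by case: (u j != 0); case: (sigma j =P i) => e /=; rewrite ?eqxx //= => _; by rewrite -e inE.
move=> j; exists [:: sigma j]; split=> //; split.
  by move=> i; rewrite /g; case: (u j != 0); case: (sigma j =P i) => e /=; rewrite ?eqxx //= => _; by rewrite -e inE.
rewrite big_seq1 /g eqxx andbT; case: (u j != 0) / boolP => uj.
  by rewrite mulNr mulrN opprK mulrCA mulfV ?mulr1 // hw.
by move: uj; rewrite negbK => /eqP ->; rewrite mulr0 oppr0.
Qed.

Lemma submod_inter (P Q : subsp) : submod P -> submod Q -> submod (fun v => P v /\ Q v).
Proof.
move=> [[P0 Pl] Pa] [[Q0 Ql] Qa]; split; first split=> //.
  by move=> a u v [??] [??]; split; [apply: Pl|apply: Ql].
by move=> g v w gM [??] a; split; [apply: Pa gM _ a|apply: Qa gM _ a].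
Qed.

Lemma rows_of (g : Sigma -> Sigma -> K) : glM g -> {r : Sigma -> seq Sigma | forall i j, g i j != 0 -> j \in r i}.
Proof.
move=> [gr _]; exists (fun i => sval (cid (gr i))) => i j; exact: (svalP (cid (gr i))).
Qed.

Lemma act_finS (g : Sigma -> Sigma -> K) (v w : rowvec) : glM g -> act g v w ->
  finS (fun i => v i != 0) -> finS (fun i => w i != 0).
Proof.
move=> gM a [s hs]; have [r hr] := rows_of gM.
exists (flatten (map r s)) => j /(act_supp a) [i [vi gij]].
apply/flatten_mapP; exists i; [exact: hs | exact: hr].
Qed.

Lemma act_le (g : Sigma -> Sigma -> K) (v w : rowvec) : glM g -> act g v w ->
  le {j | w j != 0} ({i | v i != 0} * nat).
Proof.
move=> gM a; have [r hr] := rows_of gM.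
have c : forall x : {j | w j != 0}, {i | v i != 0 /\ g i (sval x) != 0}.
  by move=> x; apply: cid; exact: (act_supp a (svalP x)).
exists (fun x => (exist (fun i => v i != 0) (sval (c x)) (proj1 (svalP (c x))),
                  index (sval x) (r (sval (c x))))).
move=> x y [e1 e2]; apply: val_inj.
have hx := hr _ _ (proj2 (svalP (c x))); have hy := hr _ _ (proj2 (svalP (c y))).
change (sval x = sval y).
have := nth_index (sval x) hy; rewrite -e2 -e1 (nth_index (sval x) hx) => ->.
by [].
Qed.
End Alg.


Section Alg2.
Variables (K : fieldType) (Sigma : eqType).
Local Notation rowvec := (rowvec K Sigma).
Local Notation subsp := (subsp K Sigma).

Lemma le_split (P Q R : Sigma -> Prop) : (forall x, P x -> Q x \/ R x) ->
  le {x | P x} ({x | Q x} + {x | R x}).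
Proof.
move=> h.
pose pr (s : {x | Q x} + {x | R x}) := match s with inl a => sval a | inr b => sval b end.
have c : forall x : {x | P x}, {s | pr s = sval x}.
  move=> x; apply: cid; case: (h _ (svalP x)) => [q|r].
    by exists (inl (exist _ _ q)).
  by exists (inr (exist _ _ r)).
exists (fun x => sval (c x)) => x y e; apply: sval_injP.
by rewrite -(svalP (c x)) -(svalP (c y)) e.
Qed.

Lemma le_union_B B (P Q R : Sigma -> Prop) : (forall x, P x -> Q x \/ R x) ->
  le {x | Q x} B -> le {x | R x} B -> le nat B -> le {x | P x} B.
Proof. by move=> h hq hr hn; apply: le_trans (le_split h) (le_suml hq hr hn). Qed.

Lemma le_union_ge B (P Q R : Sigma -> Prop) : (forall x, P x -> Q x \/ R x) ->
  le nat B -> le B {x | P x} -> le B {x | Q x} \/ le B {x | R x}.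
Proof.
move=> h hn hB.
have key : forall Q' R' : Sigma -> Prop, (forall x, P x -> Q' x \/ R' x) ->
    le {x | Q' x} {x | R' x} -> le nat {x | R' x} -> le B {x | R' x}.
  move=> Q' R' h' qr nr.
  exact: le_trans hB (le_trans (le_split h') (le_suml qr (le_refl _) nr)).
have fin : forall Q' R' : Sigma -> Prop, (forall x, P x -> Q' x \/ R' x) ->
    le {x | Q' x} {x | R' x} -> ~ le nat {x | R' x} -> False.
  move=> Q' R' h' qr nr.
  have fR : finS R' by apply: NNPP => nf; apply: nr; exact: nfinS_le.
  have fQ : finS Q' by apply: NNPP => nf; apply: nr; exact: le_trans (nfinS_le nf) qr.
  have fP : finS P.
    case: fQ => sq hq; case: fR => sr hr; exists (sq ++ sr) => x Px.
    by rewrite mem_cat; case: (h' _ Px) => [/hq|/hr] ->; rewrite ?orbT.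
  exact: (finS_nle fP) (le_trans hn hB).
have h' : forall x, P x -> R x \/ Q x by move=> x /h [?|?]; [right|left].
case: (le_total {x | Q x} {x | R x}) => qr.
  case: (classic (le nat {x | R x})) => nr; first by right; apply: key h qr nr.
  by case: (fin _ _ h qr nr).
case: (classic (le nat {x | Q x})) => nq; first by left; apply: key h' qr nq.
by case: (fin _ _ h' qr nq).
Qed.

Lemma supp_lin (a : K) (u v : rowvec) i : a * u i + v i != 0 -> u i != 0 \/ v i != 0.
Proof.
case: (eqVneq (u i) 0) => [->|]; last by left.
by rewrite mulr0 add0r; right.
Qed.

Lemma submod_zero : submod (zero_sub K Sigma).
Proof.
split; first split => //.
  by move=> a u v hu hv i; rewrite hu hv mulr0 addr0.
move=> g v w gM hv a j; apply/eqP; apply: contraT => wj.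
by have [i [vi _]] := act_supp a wj; rewrite hv eqxx in vi.
Qed.

Lemma submod_finsupp : submod (finsupp K Sigma).
Proof.
split; first split.
- by exists [::] => i; rewrite eqxx.
- move=> a u v [su hu] [sv hv]; exists (su ++ sv) => i /supp_lin [/hu|/hv];
  by rewrite mem_cat => ->; rewrite ?orbT.
- move=> g v w gM hv a; exact: act_finS gM a hv.
Qed.

Lemma le_nat_inh B : le nat B -> inhabited B.
Proof. by case=> f _; constructor; exact: f 0%N. Qed.

Lemma submod_Vle B : le nat B -> submod (Vle K Sigma B).
Proof.
move=> hn; split; first split.
- case: (le_nat_inh hn) => b; exists (fun _ => b) => -[x]; by rewrite eqxx.
- move=> a u v hu hv; exact: le_union_B (@supp_lin a u v) hu hv hn.
- move=> g v w gM hv a.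
  exact: le_trans (act_le gM a) (le_trans (le_prodl hv) (le_prod_nat hn)).
Qed.

Lemma submod_Vlt B : le nat B -> submod (Vlt K Sigma B).
Proof.
move=> hn; split; first split.
- apply/Vlt_iff => -[f _]; case: (le_nat_inh hn) => b; case: (f b) => x.
  by rewrite eqxx.
- move=> a u v /Vlt_iff hu /Vlt_iff hv; apply/Vlt_iff => hx.
  by case: (le_union_ge (@supp_lin a u v) hn hx).
- move=> g v w gM /Vlt_iff hv a; apply/Vlt_iff => hw.
  case: (classic (le nat {i | v i != 0})) => nv.
    by apply: hv; exact: le_trans hw (le_trans (act_le gM a) (le_prod_nat nv)).
  have fv : finS (fun i => v i != 0) by apply: NNPP => nf; apply: nv; exact: nfinS_le.
  exact: (finS_nle (act_finS gM a fv)) (le_trans hn hw).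
Qed.
End Alg2.


Section Alg3.
Variables (K : fieldType) (Sigma : eqType).
Local Notation rowvec := (rowvec K Sigma).
Local Notation subsp := (subsp K Sigma).

Lemma socle_le (U V : subsp) : submod V -> sub_le U V ->
  (forall P, simple_over U P -> sub_le P V) -> sub_le (socle_over U) V.
Proof.
move=> [sV _] UV hP v [n [p [hp hU]]].
have Vs : V (fun i => \sum_(k < n) p k i).
  apply: sub_sum sV _ => k; case: (hp k) => P [sP Pk]; exact: hP P sP _ Pk.
have -> : v = fun i => (v i - \sum_(k < n) p k i) + \sum_(k < n) p k i.
  by apply: funext => i; rewrite subrK.
exact: sub_add sV (UV _ hU) Vs.
Qed.

Lemma simple_in_socle (U P : subsp) : U (fun _ => 0) -> simple_over U P ->
  sub_le P (socle_over U).
Proof.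
move=> U0 sP v Pv; exists 1%N, (fun _ => v); split; first by move=> k; exists P.
suff -> : (fun i => v i - \sum_(k < 1) (fun _ : 'I_1 => v) k i) = (fun _ => 0) by [].
by apply: funext => i; rewrite big_ord1 subrr.
Qed.

Lemma simple_sub (U V P : subsp) : submod V -> sub_le U V ->
  (forall v, ~ U v -> exists g w, glM g /\ act g v w /\ V w /\ ~ U w) ->
  simple_over U P -> sub_le P V.
Proof.
move=> sV UV hw [sP UP nPU min].
case: (min (fun x => P x /\ V x) (submod_inter sP sV)
         (fun x Ux => conj (UP _ Ux) (UV _ Ux)) (fun x => @proj1 _ _)) => [QU|PQ];
  last by move=> v /PQ [].
exfalso; apply: nPU => v Pv; apply: NNPP => nU.
have [g [w [gM [a [Vw nUw]]]]] := hw v nU.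
apply: nUw; apply: QU; split=> //; case: sP => _ cl; exact: cl g v w gM Pv a.
Qed.

Lemma nzero_ex (w : rowvec) : ~ zero_sub K Sigma w -> exists j, w j != 0.
Proof.
move=> nz; apply: NNPP => nex; apply: nz => i; apply/eqP; apply: contraT => wi.
by case: nex; exists i.
Qed.

Lemma simple_finsupp (i0 : Sigma) : simple_over (zero_sub K Sigma) (finsupp K Sigma).
Proof.
split.
- exact: submod_finsupp.
- by move=> v hv; exists [::] => i; rewrite hv eqxx.
- move=> h; have /(_ i0) : zero_sub K Sigma (fun i => if i == i0 then 1 else 0).
    by apply: h; exists [:: i0] => i; case: (i =P i0) => [->|_]; rewrite ?inE ?eqxx.
  by rewrite eqxx => /eqP; rewrite oner_eq0.
- move=> Q sQ zQ Qf; case: (classic (sub_le Q (zero_sub K Sigma))) => [|nQ]; [by left|right].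
  have [w [Qw nzw]] : exists w, Q w /\ ~ zero_sub K Sigma w.
    by apply: NNPP => nex; apply: nQ => w Qw; apply: NNPP => nzw; apply: nex; exists w.
  have [j0 wj0] := nzero_ex nzw.
  move=> u [s hs].
  have [g [gM a]] := @transport_act K Sigma w u (fun _ => j0) (fun _ _ => wj0)
    (fun i => ex_intro _ s (fun j uj _ => hs j uj)).
  case: sQ => _ cl; exact: cl g w u gM Qw a.
Qed.

Lemma simple_Vle B (e : B -> Sigma) : injective e -> le nat B ->
  simple_over (Vlt K Sigma B) (Vle K Sigma B).
Proof.
move=> ei hn.
pose chi := fun i => if `[< exists b, e b = i >] then 1 else 0 : K.
have chi1 : forall i, chi i != 0 -> exists b, e b = i.
  by move=> i; rewrite /chi; case: (asboolP (exists b, e b = i)) => // _; rewrite eqxx.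
have chie : forall b, chi (e b) != 0.
  by move=> b; rewrite /chi; case: asboolP => [_|[]]; [exact: oner_neq0 | exists b].
split.
- exact: submod_Vle.
- move=> v /Vlt_iff hv; case: (le_total {i | v i != 0} B) => // /hv [].
- move=> h; have /Vlt_iff : Vlt K Sigma B chi.
    apply: h; exists (fun x => sval (cid (chi1 _ (svalP x)))) => x y exy.
    apply: val_inj; rewrite /= -(svalP (cid (chi1 _ (svalP x)))).
    by rewrite -(svalP (cid (chi1 _ (svalP y)))) exy.
  apply; exists (fun b => exist (fun i => chi i != 0) (e b) (chie b)).
  by move=> x y /(congr1 sval) /ei.
- move=> Q sQ LQ QV; case: (classic (sub_le Q (Vlt K Sigma B))) => [|nQ]; [by left|right].
  have [w [Qw nLw]] : exists w, Q w /\ ~ Vlt K Sigma B w.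
    by apply: NNPP => nex; apply: nQ => w Qw; apply: NNPP => nzw; apply: nex; exists w.
  have [f fi] : le B {i | w i != 0} by apply: NNPP => nl; apply: nLw; apply/Vlt_iff.
  move=> u [h hi].
  pose sg j := match pselect (u j != 0) with
               | left p => sval (f (h (exist (fun i => u i != 0) j p))) | right _ => j end.
  have sgE : forall j (p : u j != 0), sg j = sval (f (h (exist (fun i => u i != 0) j p))).
    move=> j p; rewrite /sg; case: pselect => [p'|np]; last by case: np.
    by rewrite (Prop_irrelevance p' p).
  have [g [gM a]] : exists g, glM g /\ act g w u.
    apply: (@transport_act K Sigma w u sg).
      by move=> j p; rewrite (sgE j p); exact: (svalP (f _)).
    move=> i; case: (classic (exists j, u j != 0 /\ sg j = i)) => [[j0 [p0 e0]]|n].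
      exists [:: j0] => j p ej; rewrite inE; apply/eqP.
      have : sg j = sg j0 by rewrite ej e0.
      rewrite (sgE j p) (sgE j0 p0) => /sval_injP /fi /hi /(congr1 sval) //.
    by exists [::] => j p ej; case: n; exists j.
  case: sQ => _ cl; exact: cl g w u gM Qw a.
Qed.

Lemma socle_zero (i0 : Sigma) : sub_eq (socle_over (zero_sub K Sigma)) (finsupp K Sigma).
Proof.
move=> v; split; last by apply: (@simple_in_socle _ _ _ (simple_finsupp i0)) => i.
apply: socle_le v; first exact: submod_finsupp.
  by move=> v hv; exists [::] => i; rewrite hv eqxx.
move=> P; apply: simple_sub; first exact: submod_finsupp.
  by move=> x hx; exists [::] => i; rewrite hx eqxx.
move=> x /nzero_ex [j0 xj0].
have [gM a] := proj_act (fun j => j == j0) x.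
eexists; eexists; split; first exact: gM; split; first exact: a; split.
  by exists [:: j0] => i; rewrite inE; case: (i == j0); rewrite ?eqxx.
by move/(_ j0); rewrite eqxx => /eqP; rewrite (negbTE xj0).
Qed.

Lemma socle_Vlt B (e : B -> Sigma) : injective e -> le nat B ->
  sub_eq (socle_over (Vlt K Sigma B)) (Vle K Sigma B).
Proof.
move=> ei hn v; split; last first.
  apply: (@simple_in_socle _ _ _ (simple_Vle ei hn)).
  by case: (submod_Vlt K Sigma hn) => -[].
have [_ LV _ _] := simple_Vle ei hn.
apply: socle_le v; first exact: submod_Vle.
  exact: LV.
move=> P; apply: simple_sub; first exact: submod_Vle.
  exact: LV.
move=> x nLx.
have [f fi] : le B {i | x i != 0} by apply: NNPP => nl; apply: nLx; apply/Vlt_iff.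
pose D := fun j => `[< exists b, sval (f b) = j >].
have [gM a] := proj_act D x.
eexists; eexists; split; first exact: gM; split; first exact: a; split.
  have D1 : forall j, (if D j then x j else 0) != 0 -> exists b, sval (f b) = j.
    by move=> j; rewrite /D; case: asboolP => // _; rewrite eqxx.
  exists (fun y => sval (cid (D1 _ (svalP y)))) => y z eyz.
  apply: val_inj; rewrite /= -(svalP (cid (D1 _ (svalP y)))).
  by rewrite -(svalP (cid (D1 _ (svalP z)))) eyz.
have De : forall b, (if D (sval (f b)) then x (sval (f b)) else 0) != 0.
  move=> b; rewrite /D; case: asboolP => [_|[]]; last by exists b.
  exact: (svalP (f b)).
move/Vlt_iff; apply.
exists (fun b => exist (fun i => (if D i then x i else 0) != 0) (sval (f b)) (De b)).
by move=> b c ebc; apply: fi; apply: sval_injP; exact: (congr1 sval ebc).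
Qed.
End Alg3.


Section Alg4.
Variables (K : fieldType) (Sigma : eqType).
Hypothesis SigInf : le nat Sigma.
Local Notation rowvec := (rowvec K Sigma).
Local Notation subsp := (subsp K Sigma).
Local Notation zero := (zero_sub K Sigma).
Local Notation full := (full_sub K Sigma).

Lemma i0_ex : inhabited Sigma. Proof. exact: le_nat_inh SigInf. Qed.

Lemma Vlt_mono B B' : le B B' -> sub_le (Vlt K Sigma B) (Vlt K Sigma B').
Proof. by move=> hb v /Vlt_iff h; apply/Vlt_iff => h'; apply: h; exact: le_trans hb h'. Qed.

Lemma zero_Vlt B (v : rowvec) : inhabited B -> zero v -> Vlt K Sigma B v.
Proof. by move=> [b] zv; apply/Vlt_iff => -[f _]; have := svalP (f b); rewrite zv eqxx. Qed.

Lemma le_sig (Y : Sigma -> Prop) : le {x | Y x} Sigma.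
Proof. by exists sval => x y /sval_injP. Qed.

Lemma finsupp_Vlt : sub_eq (finsupp K Sigma) (Vlt K Sigma nat).
Proof.
move=> v; split.
  by move=> fv; apply/Vlt_iff; exact: (finS_nle fv).
by move/Vlt_iff => h; apply: NNPP => nf; apply: h; exact: nfinS_le nf.
Qed.

Definition classif (W : subsp) := sub_eq W zero \/ sub_eq W full \/
  exists B : Type, le nat B /\ le B Sigma /\ sub_eq W (Vlt K Sigma B).

Lemma socle_full : sub_eq (socle_over full) full.
Proof.
move=> v; split => // _; exists 0%N, (fun _ _ => 0); split => //; by case.
Qed.

Lemma succ_classif W : classif W -> classif (socle_over W).
Proof.
case: i0_ex => i0.
case=> [/subeqE ->|[/subeqE ->|[B [hn [[e ei] /subeqE ->]]]]].
- right; right; exists nat; split; first exact: le_refl; split => // v.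
  by rewrite socle_zero // finsupp_Vlt.
- by right; left; exact: socle_full.
- have hs := socle_Vlt (K:=K) ei hn; rewrite (subeqE hs).
  case: (classic (sub_le full (Vle K Sigma B))) => [hf|nf].
    by right; left => v; split => // _; exact: hf.
  have [v nv] : exists v, ~ Vle K Sigma B v.
    by apply: NNPP => nex; apply: nf => v _; apply: NNPP => nv; apply: nex; exists v.
  have [[Y0 hY0] min] := @family_min {Y : Sigma -> Prop | ~ le {x | Y x} B}
    (fun Y => {x | sval Y x}) (inhabits (exist _ (fun i => (v i != 0 : Prop)) nv)).
  simpl in hY0, min.
  right; right; exists {x | Y0 x}; split; last split.
  + case: (le_total nat {x | Y0 x}) => // h; case: hY0; exact: le_trans h hn.
  + exact: le_sig.
  + move=> u; split.
      by move=> hu; apply/Vlt_iff => h; apply: hY0; exact: le_trans h hu.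
    move/Vlt_iff => h; apply: NNPP => nle; apply: h.
    exact: (min (exist _ (fun i => (u i != 0 : Prop)) nle)).
Qed.

Lemma union_classif (F : subsp -> Prop) : (forall W, F W -> classif W) ->
  classif (fun v => zero v \/ exists W, F W /\ W v).
Proof.
move=> IH.
case: (classic (exists W, F W /\ sub_eq W full)) => [[W [FW Wf]]|nf].
  right; left => v; split => // _; right; exists W; split => //; exact/Wf.
case: (classic (exists W B, F W /\ le nat B /\ le B Sigma /\ sub_eq W (Vlt K Sigma B)))
  => [[W0 [B0 [FW0 [n0 [s0 e0]]]]]|nv]; last first.
  left => v; split; last by left.
  case=> // -[W [FW Wv]].
  case: (IH W FW) => [hz|[Wf|[B [hn [hs he]]]]].
  - by apply/hz.
  - by case: nf; exists W.
  by case: nv; exists W, B.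
have inh : inhabited {Y : Sigma -> Prop | forall W B, F W -> le nat B ->
      le B Sigma -> sub_eq W (Vlt K Sigma B) -> le B {x | Y x}}.
  constructor; exists (fun _ => True) => W B _ _ [f fi] _.
  by exists (fun b => exist (fun _ => True) (f b) I) => x y /(congr1 sval) /fi.
have [[Y0 hY0] min] := @family_min _ (fun Y => {x | sval Y x}) inh.
simpl in hY0, min.
have BY := hY0 W0 B0 FW0 n0 s0 e0.
have inhY : inhabited {x | Y0 x} by case: (le_nat_inh (le_trans n0 BY)) => y; constructor.
right; right; exists {x | Y0 x}; split; last split.
- exact: le_trans n0 BY.
- exact: le_sig.
- move=> v; split.
    case; first exact: zero_Vlt.
    move=> [W [FW Wv]]; case: (IH W FW) => [/(_ v) [zv _]|[Wf|[B [hn [hs he]]]]].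
    + exact: zero_Vlt (zv Wv).
    + by case: nf; exists W.
    + apply: (Vlt_mono (hY0 W B FW hn hs he)); exact/he.
  move/Vlt_iff => h; right; apply: NNPP => nex; apply: h.
  apply: (min (exist _ (fun i => (v i != 0 : Prop)) _)) => W B FW hn hs he.
  apply: NNPP => nl; apply: nex; exists W; split => //; apply/he; exact/Vlt_iff.
Qed.

Lemma layers_classif W : SocLayer W -> classif W.
Proof.
elim=> [F _ IH|W' _ IH]; first exact: union_classif.
exact: succ_classif.
Qed.

Lemma layer_zero : exists W, SocLayer W /\ sub_eq W zero.
Proof.
exists (fun v => zero v \/ exists W, False /\ W v); split.
  by apply: SL_union => W [].
by move=> v; split; [case=> // -[W [[]]] | left].
Qed.

Lemma layer_Vlt B : le nat B -> le B Sigma -> exists W, SocLayer W /\ sub_eq W (Vlt K Sigma B).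
Proof.
move=> hn [e ei]; case: i0_ex => i0.
pose F := fun W => SocLayer W /\ sub_le W (Vlt K Sigma B).
pose U := fun v => zero v \/ exists W, F W /\ W v.
have LU : SocLayer U by apply: SL_union => W [].
have UB : sub_le U (Vlt K Sigma B).
  move=> v [zv|[W [[_ WB] Wv]]]; [exact: zero_Vlt (le_nat_inh hn) zv | exact: WB].
have FU : forall W, SocLayer W -> sub_le W (Vlt K Sigma B) -> sub_le W U.
  by move=> W LW WB v Wv; right; exists W.
have [_ _ nVV _] := simple_Vle K ei hn.
case: (layers_classif LU) => [/subeqE EU|[/subeqE EU|[B' [hn' [[e' ei'] /subeqE EU]]]]].
- exfalso.
  case: (classic (sub_le (finsupp K Sigma) (Vlt K Sigma B))) => [hf|nf].
    have [_ _ nfz _] := simple_finsupp K i0.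
    apply: nfz => v fv; rewrite -EU; apply: (FU _ (SL_succ LU)); last first.
      by rewrite EU; apply/(socle_zero i0).
    by move=> x; rewrite EU => /(socle_zero i0) /hf.
  have [v [fv nv]] : exists v, finsupp K Sigma v /\ ~ Vlt K Sigma B v.
    by apply: NNPP => nex; apply: nf => v fv; apply: NNPP => nv; apply: nex; exists v.
  have hl : le B {i | v i != 0} by apply: NNPP => nl; apply: nv; apply/Vlt_iff.
  exact: (finS_nle fv) (le_trans hn hl).
- exfalso; apply: nVV => v _; apply: UB; by rewrite EU.
- have hs := socle_Vlt (K:=K) ei' hn'.
  have [_ _ nVV' _] := simple_Vle K ei' hn'.
  case: (classic (sub_le (Vle K Sigma B') (Vlt K Sigma B))) => [hf|nf].
    exfalso; apply: nVV' => v hv; rewrite -EU.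
    apply: (FU _ (SL_succ LU)); last by rewrite EU; apply/hs.
    by move=> x; rewrite EU => /hs /hf.
  have [v [fv nv]] : exists v, Vle K Sigma B' v /\ ~ Vlt K Sigma B v.
    by apply: NNPP => nex; apply: nf => v fv; apply: NNPP => nv; apply: nex; exists v.
  have hl : le B {i | v i != 0} by apply: NNPP => nl; apply: nv; apply/Vlt_iff.
  have BB' : le B B' := le_trans hl fv.
  exists U; split => // v'; split; first exact: UB.
  by move/(Vlt_mono BB'); rewrite -EU.
Qed.

Lemma layer_full : exists W, SocLayer W /\ sub_eq W full.
Proof.
have [W [LW EW]] := @layer_Vlt Sigma SigInf (le_refl _).
exists (socle_over W); split; first exact: SL_succ.
case: SigInf => f fi.
rewrite (subeqE EW) => v; rewrite (@socle_Vlt K Sigma Sigma id (fun x y e => e) SigInf v).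
by split => // _; exists sval => x y /sval_injP.
Qed.
End Alg4.


Theorem mainTheorem8 (K : closedFieldType) (Sigma : eqType)
  (charK0 : [pchar K] =i pred0)
  (Sigma_infinite : exists f : nat -> Sigma, injective f) :
  (* soc V^* = V_* = V^*_{aleph_0} *)
  sub_eq (socle_over (zero_sub K Sigma)) (finsupp K Sigma) /\
  sub_eq (finsupp K Sigma) (Vlt K Sigma nat) /\
  (* for every infinite cardinal beta = |B| <= alpha = |Sigma| *)
  (forall B : Type, (exists f : nat -> B, injective f) ->
     (exists f : B -> Sigma, injective f) ->
     sub_eq (socle_over (Vlt K Sigma B)) (Vle K Sigma B) /\
     simple_over (Vlt K Sigma B) (Vle K Sigma B)) /\
  (* the transfinite socle filtration of V^* consists exactly of
     0 and the V^*_beta, beta infinite, beta <= alpha^+ (V^*_{alpha^+} = V^* ) *)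
  (forall W, SocLayer W ->
     sub_eq W (zero_sub K Sigma) \/ sub_eq W (full_sub K Sigma) \/
     exists B : Type, (exists f : nat -> B, injective f) /\
       (exists f : B -> Sigma, injective f) /\ sub_eq W (Vlt K Sigma B)) /\
  (exists W, SocLayer W /\ sub_eq W (zero_sub K Sigma)) /\
  (exists W, SocLayer W /\ sub_eq W (full_sub K Sigma)) /\
  (forall B : Type, (exists f : nat -> B, injective f) ->
     (exists f : B -> Sigma, injective f) ->
     exists W, SocLayer W /\ sub_eq W (Vlt K Sigma B)).
Proof.
have SI : le nat Sigma := Sigma_infinite.
have [i0] := i0_ex SI.
split; first exact: socle_zero i0.
split; first exact: (@finsupp_Vlt K Sigma).
split.
  move=> B hn [e ei]; split; first exact: socle_Vlt ei hn.
  exact: simple_Vle ei hn.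
split; first exact: (@layers_classif K Sigma SI).
split; first exact: (@layer_zero K Sigma).
split; first exact: (@layer_full K Sigma SI).
move=> B hn hs; exact: (@layer_Vlt K Sigma SI B hn hs).
Qed.
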